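(* Let $G,H$ be groups, $\tau\in\mathrm{CA}(A^G)$, $\phi\in\mathrm{Hom}(H,G)$, and suppose $\mathcal{T}:=\phi^*\circ\tau$ is non-constant. If $\psi\in\mathrm{Hom}(H,G)$ is such that the difference set $\Delta(\phi,\psi)$ is infinite, then $\mathcal{T}\neq\psi^*\circ\tau$.
   Context: $A$ is a finite set with $|A|\ge 2$. $A^G$ is the set of functions $G\to A$ with shift action $(g\cdot x)(k):=x(g^{-1}k)$. $\mathrm{CA}(A^G)$ is the set of maps $\tau:A^G\to A^G$ for which there exist finite $T\subseteq G$ and $\mu:A^T\to A$ with $\tau(x)(g)=\mu((g^{-1}\cdot x)|_T)$ for all $x,g$. For $\phi\in\mathrm{Hom}(H,G)$, $\phi^*:A^G\to A^H$ is $\phi^*(x):=x\circ\phi$. For $\phi,\psi\in\mathrm{Hom}(H,G)$, $\Delta(\phi,\psi):=\{\psi(h)^{-1}\phi(h):h\in H\}\subseteq G$. *)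

(* Defs.v *)
From Stdlib Require List.
From mathcomp Require Import all_boot.
Set Implicit Arguments.
Unset Strict Implicit.
Unset Printing Implicit Defensive.

Record group := Group {
  gcar :> Type;
  gmul : gcar -> gcar -> gcar;
  gone : gcar;
  ginv : gcar -> gcar;
  gmulA : forall x y z, gmul x (gmul y z) = gmul (gmul x y) z;
  gmul1x : forall x, gmul gone x = x;
  gmulx1 : forall x, gmul x gone = x;
  gmulVx : forall x, gmul (ginv x) x = gone;
  gmulxV : forall x, gmul x (ginv x) = gone
}.

Definition is_hom (H G : group) (phi : H -> G) : Prop :=
  forall h1 h2 : H, phi (gmul h1 h2) = gmul (phi h1) (phi h2).

Definition shift (A : Type) (G : group) (g : G) (x : G -> A) : G -> A :=
  fun k => x (gmul (ginv g) k).

Definition restrict (A : Type) (G : group) (T : list G) (x : G -> A)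
  : {k : G | List.In k T} -> A :=
  fun k => x (proj1_sig k).

Definition is_CA (A : Type) (G : group) (tau : (G -> A) -> (G -> A)) : Prop :=
  exists (T : list G) (mu : ({k : G | List.In k T} -> A) -> A),
    forall (x : G -> A) (g : G), tau x g = mu (@restrict A G T (@shift A G (ginv g) x)).

Definition pullback (A : Type) (H G : group) (phi : H -> G) (x : G -> A) : H -> A :=
  fun h => x (phi h).

Definition Delta (H G : group) (phi psi : H -> G) : G -> Prop :=
  fun g => exists h : H, g = gmul (ginv (psi h)) (phi h).

Definition finite_set (T : Type) (S : T -> Prop) : Prop :=
  exists l : list T, forall t, S t -> List.In t l.

(* Main.v *)
Require Import Defs.
From mathcomp Require Import all_boot.
From Stdlib Require Import Classical ClassicalEpsilon FunctionalExtensionality.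
From Stdlib Require List.

Section Aux.
Variable G : group.
Lemma ginvK (a : G) : ginv (ginv a) = a.
Proof.
  transitivity (gmul (ginv (ginv a)) (gmul (ginv a) a)).
    by rewrite gmulVx gmulx1.
  by rewrite gmulA gmulVx gmul1x.
Qed.
Lemma cancelL (a k : G) : gmul (ginv a) (gmul a k) = k.
Proof. by rewrite gmulA gmulVx gmul1x. Qed.
Lemma diff_eq (a b k t : G) : gmul b k = gmul a t ->
  gmul (ginv b) a = gmul k (ginv t).
Proof.
  move=> E. rewrite -[gmul (ginv b) a]gmulx1 -(gmulxV t) !gmulA.
  rewrite -(gmulA (ginv b) a t) -E. by rewrite cancelL.
Qed.
End Aux.

Theorem theorem3p9 (A : finType) (G H : group)
    (tau : (G -> A) -> (G -> A)) (phi psi : H -> G) :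
  1 < #|A| ->
  is_CA tau ->
  is_hom phi ->
  (exists x y : G -> A, pullback phi (tau x) <> pullback phi (tau y)) ->
  is_hom psi ->
  ~ finite_set (Delta phi psi) ->
  (fun x => pullback phi (tau x)) <> (fun x => pullback psi (tau x)).
Proof.
  move=> _ [T [mu Hmu]] _ [x [y Hxy]] _ Hinf Heq.
  have [h0 Hh0] : exists h0, tau x (phi h0) <> tau y (phi h0).
    apply: NNPP => Hn; apply: Hxy; apply: functional_extensionality => h.
    apply: NNPP => Hn2; apply: Hn; exists h; exact Hn2.
  set l := List.flat_map (fun k => List.map (fun t => gmul k (ginv t)) T) T.
  have [d [Hd Hdl]] : exists d, Delta phi psi d /\ ~ List.In d l.
    apply: NNPP => Hn; apply: Hinf; exists l => d Hd.
    apply: NNPP => Hn2; apply: Hn; exists d; split; assumption.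
  case: Hd => h Hdh.
  set a := phi h. set b := psi h.
  pose z (g : G) : A :=
    match excluded_middle_informative (exists t, List.In t T /\ g = gmul a t) with
    | left _ => x (gmul (phi h0) (gmul (ginv a) g))
    | right _ => y (gmul (phi h0) (gmul (ginv b) g))
    end.
  have E1 : tau z a = tau x (phi h0).
    rewrite !Hmu; congr mu; apply: functional_extensionality => [[k Hk]].
    rewrite /restrict /shift /= !ginvK /z.
    case: excluded_middle_informative => [_|Hn].
      by rewrite cancelL.
    by exfalso; apply: Hn; exists k.
  have E2 : tau z b = tau y (phi h0).
    rewrite !Hmu; congr mu; apply: functional_extensionality => [[k Hk]].
    rewrite /restrict /shift /= !ginvK /z.
    case: excluded_middle_informative => [[t [Ht Ebt]]|_].
      exfalso; apply: Hdl. rewrite Hdh.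
      have -> : gmul (ginv (psi h)) (phi h) = gmul k (ginv t) by exact: diff_eq.
      apply/List.in_flat_map; exists k; split => //.
      apply/List.in_map_iff; exists t; split => //.
    by rewrite cancelL.
  apply: Hh0; rewrite -E1 -E2.
  have := f_equal (fun F => F z h) Heq. by rewrite /pullback.
Qed.
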